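(* Let $(X,G)$ be an abstract real spectrum. For $a,b\in G$ define $a+b=D^t(a,b)$, $-a=(-1)\cdot a$, and let $\cdot$ be pointwise multiplication, $0$ and $1$ the constant functions. Then $(G,+,\cdot,-,0,1)$ is a real reduced multiring.
   Context: For a set $X$, $\{-1,0,1\}^X$ is a monoid under pointwise multiplication. An abstract real spectrum (ARS) is a pair $(X,G)$ such that: (AX1) $X$ is a non-empty set, $G$ is a submonoid of $\{-1,0,1\}^X$ containing the constant functions $-1,0,1$, and $G$ separates points of $X$. For $a,b\in G$, $D(a,b)$ is the set of $c\in G$ such that for all $x\in X$: $a(x)c(x)>0$ or $b(x)c(x)>0$ or $c(x)=0$; and $D^t(a,b)$ is the set of $c\in G$ such that for all $x\in X$: $a(x)c(x)>0$ or $b(x)c(x)>0$ or ($c(x)=0$ and $b(x)=-a(x)$). (AX2) If $P$ is a submonoid of $G$ with $P\cup -P=G$, $-1\notin P$, $a,b\in P\Rightarrow D(a,b)\subseteq P$, and $ab\in P\cap -P\Rightarrow a\in P\cap-P$ or $b\in P\cap -P$, then there is $x\in X$ with $P=\{a\in G:a(x)\ge 0\}$. (AX3) For all $a,b,c\in G$: if $p\in D^t(a,q)$ for some $q\in D^t(b,c)$, then $p\in D^t(r,c)$ for some $r\in D^t(a,b)$. A multiring is a tuple $(R,+,\cdot,-,0,1)$ with $+:R\times R\to\mathcal P(R)\setminus\{\emptyset\}$ satisfying: $z\in x+y\Rightarrow x\in z+(-y)$ and $y\in(-x)+z$; $y\in0+x\iff y=x$; $+$ associative (with $Z+w=\bigcup_{z\in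 Z}(z+w)$) and commutative; $(R,\cdot,1)$ a commutative monoid; $a0=0$; $c\in a+b\Rightarrow cd\in ad+bd$. A multiring $A$ is real reduced if $1\neq 0$ and for all $a,b,c,d\in A$: $a^3=a$; $c\in a+ab^2\Rightarrow c=a$; $c,d\in a^2+b^2\Rightarrow c=d$. *)

(* Defs.v *)
(* Elements of {-1,0,1}^X are represented as functions X -> Z
   taking values in {-1,0,1}; a submonoid G is a predicate on (X -> Z). *)
From Stdlib Require Import ZArith.
Open Scope Z_scope.

Definition cst {X : Type} (k : Z) : X -> Z := fun _ => k.
Definition pmul {X : Type} (a b : X -> Z) : X -> Z := fun x => a x * b x.
Definition pneg {X : Type} (a : X -> Z) : X -> Z := pmul (cst (-1)) a.

Definition sign_valued {X : Type} (f : X -> Z) : Prop :=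
  forall x, f x = -1 \/ f x = 0 \/ f x = 1.

Definition D {X : Type} (G : (X -> Z) -> Prop) (a b c : X -> Z) : Prop :=
  G c /\ forall x, a x * c x > 0 \/ b x * c x > 0 \/ c x = 0.

Definition Dt {X : Type} (G : (X -> Z) -> Prop) (a b c : X -> Z) : Prop :=
  G c /\ forall x, a x * c x > 0 \/ b x * c x > 0 \/ (c x = 0 /\ b x = - a x).

Definition AX1 (X : Type) (G : (X -> Z) -> Prop) : Prop :=
  inhabited X /\
  (forall g, G g -> sign_valued g) /\
  (forall a b, G a -> G b -> G (pmul a b)) /\
  G (cst (-1)) /\ G (cst 0) /\ G (cst 1) /\
  (forall x y : X, x <> y -> exists g, G g /\ g x <> g y).

Definition AX2 (X : Type) (G : (X -> Z) -> Prop) : Prop :=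
  forall P : (X -> Z) -> Prop,
    (forall a, P a -> G a) ->
    P (cst 1) ->
    (forall a b, P a -> P b -> P (pmul a b)) ->
    (forall g, G g -> P g \/ P (pneg g)) ->
    ~ P (cst (-1)) ->
    (forall a b c, P a -> P b -> D G a b c -> P c) ->
    (forall a b, G a -> G b -> P (pmul a b) -> P (pneg (pmul a b)) ->
        (P a /\ P (pneg a)) \/ (P b /\ P (pneg b))) ->
    exists x : X, forall a, P a <-> (G a /\ a x >= 0).

Definition AX3 (X : Type) (G : (X -> Z) -> Prop) : Prop :=
  forall a b c p, G a -> G b -> G c ->
    (exists q, Dt G b c q /\ Dt G a q p) ->
    exists r, Dt G a b r /\ Dt G r c p.

Definition ARS (X : Type) (G : (X -> Z) -> Prop) : Prop :=
  AX1 X G /\ AX2 X G /\ AX3 X G.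

(* Multiring whose carrier is the subset S of a type T; add x y z means
   z ∈ x + y. *)
Definition multiring_on {T : Type} (S : T -> Prop) (add : T -> T -> T -> Prop)
  (mul : T -> T -> T) (neg : T -> T) (zero one : T) : Prop :=
  S zero /\ S one /\
  (forall x y, S x -> S y -> S (mul x y)) /\
  (forall x, S x -> S (neg x)) /\
  (forall x y z, S x -> S y -> add x y z -> S z) /\
  (forall x y, S x -> S y -> exists z, add x y z) /\
  (forall x y z, S x -> S y -> S z -> add x y z ->
      add z (neg y) x /\ add (neg x) z y) /\
  (forall x y, S x -> S y -> (add zero x y <-> y = x)) /\
  (forall x y z w, S x -> S y -> S z -> S w ->
      ((exists u, S u /\ add x y u /\ add u z w) <->
       (exists v, S v /\ add y z v /\ add x v w))) /\
  (forall x y z, S x -> S y -> S z -> (add x y z <-> add y x z)) /\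
  (forall x y z, S x -> S y -> S z -> mul (mul x y) z = mul x (mul y z)) /\
  (forall x y, S x -> S y -> mul x y = mul y x) /\
  (forall x, S x -> mul x one = x) /\
  (forall a, S a -> mul a zero = zero) /\
  (forall a b c d, S a -> S b -> S c -> S d -> add a b c ->
      add (mul a d) (mul b d) (mul c d)).

Definition real_reduced_multiring_on {T : Type} (S : T -> Prop)
  (add : T -> T -> T -> Prop) (mul : T -> T -> T) (neg : T -> T)
  (zero one : T) : Prop :=
  multiring_on S add mul neg zero one /\
  one <> zero /\
  (forall a, S a -> mul a (mul a a) = a) /\
  (forall a b c, S a -> S b -> S c -> add a (mul a (mul b b)) c -> c = a) /\
  (forall a b c d, S a -> S b -> S c -> S d ->
      add (mul a a) (mul b b) c -> add (mul a a) (mul b b) d -> c = d).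

(* Main.v *)
Require Import Defs.
From Stdlib Require Import ZArith Lia FunctionalExtensionality.
Open Scope Z_scope.

Definition SV (z : Z) := z = -1 \/ z = 0 \/ z = 1.

Ltac dsv := repeat match goal with H : SV _ |- _ => destruct H as [ -> | [ -> | -> ] ] end.
Ltac pw := intros; dsv; lia.

Lemma p_neg a b c : SV a -> SV b -> SV c ->
  (a*c>0 \/ b*c>0 \/ (c=0/\b=-a)) -> (c*a>0 \/ (-1*b)*a>0 \/ (a=0 /\ -1*b = - c)).
Proof. pw. Qed.
Lemma p_com a b c : SV a -> SV b -> SV c ->
  (a*c>0 \/ b*c>0 \/ (c=0/\b=-a)) -> (b*c>0 \/ a*c>0 \/ (c=0/\a=-b)).
Proof. pw. Qed.
Lemma p_zero a c : SV a -> SV c ->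
  (0*c>0 \/ a*c>0 \/ (c=0/\a=-0)) <-> c = a.
Proof. intros; dsv; split; lia. Qed.
Lemma p_dist a b c d : SV a -> SV b -> SV c -> SV d ->
  (a*c>0 \/ b*c>0 \/ (c=0/\b=-a)) ->
  ((a*d)*(c*d)>0 \/ (b*d)*(c*d)>0 \/ (c*d=0/\b*d=-(a*d))).
Proof. pw. Qed.
Lemma p_cube a : SV a -> a*(a*a) = a.
Proof. pw. Qed.
Lemma p_rr1 a b c : SV a -> SV b -> SV c ->
  (a*c>0 \/ (a*(b*b))*c>0 \/ (c=0/\a*(b*b)=-a)) -> c = a.
Proof. pw. Qed.
Lemma p_rr2 a b c d : SV a -> SV b -> SV c -> SV d ->
  ((a*a)*c>0 \/ (b*b)*c>0 \/ (c=0/\b*b=-(a*a))) ->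
  ((a*a)*d>0 \/ (b*b)*d>0 \/ (d=0/\b*b=-(a*a))) -> c = d.
Proof. pw. Qed.
Lemma p_any b : SV b -> (b*0>0 \/ (-1*b)*0>0 \/ (0=0/\ -1*b = -b)).
Proof. pw. Qed.

Theorem theorem4p3 (X : Type) (G : (X -> Z) -> Prop) :
  ARS X G ->
  real_reduced_multiring_on G (Dt G) pmul pneg (cst 0) (cst 1).
Proof.
  intros [[[x0] [Hsv [Hmul [Hm1 [H0 [H1 _]]]]]] [_ AX3]].
  assert (S : forall g x, G g -> SV (g x)) by (intros g x Hg; exact (Hsv g Hg x)).
  assert (Hneg : forall a, G a -> G (pneg a)) by (intros; apply Hmul; auto).
  assert (Com : forall a b c, G a -> G b -> Dt G a b c -> Dt G b a c).
  { intros a b c Ha Hb [Hc Hx]; split; auto; intro x; apply p_com; auto. }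
  assert (Zer : forall a c, G a -> G c -> (Dt G (cst 0) a c <-> c = a)).
  { intros a c Ha Hc; split.
    - intros [_ Hx]; apply functional_extensionality; intro x.
      apply (p_zero (a x) (c x)); auto; exact (Hx x).
    - intros ->; split; auto; intro x; apply (p_zero (a x) (a x)); auto. }
  assert (Zer' : forall a c, G a -> Dt G (cst 0) a c -> c = a).
  { intros a c Ha Hd; apply Zer; auto; apply Hd. }
  split; [|split; [|split; [|split]]].
  - split; [exact H0|]. split; [exact H1|]. split; [exact Hmul|]. split; [exact Hneg|].
    split; [intros x y z _ _ [Hz _]; exact Hz|].
    split.
    { intros a b Ha Hb.
      destruct (AX3 a b (pneg b) a Ha Hb (Hneg b Hb)) as [r [Hr _]].
      - exists (cst 0). split.
        + split; auto; intro x; apply (p_any (b x)); auto.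
        + apply Com; auto. apply Zer; auto.
      - exists r; exact Hr. }
    split.
    { intros a b c Ha Hb Hc [_ Hx]. split.
      - split; auto; intro x; apply p_neg; auto.
      - apply Com; auto. split; auto. intro x. apply p_neg; auto. apply p_com; auto. }
    split; [intros; apply Zer; auto|].
    split.
    { intros a b c w Ha Hb Hc Hw; split.
      - intros [u [Hu [H1' H2']]].
        destruct (AX3 c b a w Hc Hb Ha) as [r [Hr1 Hr2]].
        + exists u; split; apply Com; auto; apply H1'.
        + exists r; split; [apply Hr1|]. split; apply Com; auto; apply Hr1.
      - intros [v [Hv [H1' H2']]].
        destruct (AX3 a b c w Ha Hb Hc) as [r [Hr1 Hr2]].
        + exists v; split; auto.
        + exists r; split; [apply Hr1|]; auto. }
    split; [intros; split; apply Com; auto|].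
    split; [intros; apply functional_extensionality; intro; unfold pmul; ring|].
    split; [intros; apply functional_extensionality; intro; unfold pmul; ring|].
    split; [intros; apply functional_extensionality; intro; unfold pmul, cst; ring|].
    split; [intros; apply functional_extensionality; intro; unfold pmul, cst; ring|].
    intros a b c d Ha Hb Hc Hd [_ Hx]. split; auto.
    intro x; apply p_dist; auto.
  - intro E. assert (E' := f_equal (fun f => f x0) E). unfold cst in E'. discriminate.
  - intros; apply functional_extensionality; intro; unfold pmul; apply p_cube; auto.
  - intros a b c Ha Hb Hc [_ Hx]; apply functional_extensionality; intro x.
      apply (p_rr1 (a x) (b x)); auto.
  - intros a b c d Ha Hb Hc Hd [_ Hx] [_ Hy]; apply functional_extensionality; intro x.
    apply (p_rr2 (a x) (b x)); auto; [exact (Hx x)|exact (Hy x)].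
Qed.
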